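(* Let $C$ be a completely transitive code in $H(m,2)$ with $\mathbf 0\in C$ and minimum distance $\delta\in\{5,6\}$. Then the set of all codewords of weight $\delta$ forms the block set of a $t$-$(m,\delta,\lambda)$ design, where either 1. $\delta=5$, $t=2$ and $\lambda\le (m-2)/3$; or 2. $\delta=6$, $t=3$ and $\lambda\le (m-3)/3$.
   Context: $H(m,2)$: vertex set $\mathbb F_2^m$ with coordinates indexed by a set $M$ of size $m$; vertices are identified with their supports (subsets of $M$), and the weight of a vertex is the size of its support. For a code $C$: covering radius $\rho=\max_\alpha d(\alpha,C)$, $C_i=\{\alpha:d(\alpha,C)=i\}$. $\mathrm{Aut}(C)$ is the setwise stabiliser of $C$ in the automorphism group of $H(m,2)$ (translations together with coordinate permutations); $C$ is completely transitive if $\mathrm{Aut}(C)$ is transitive on each of $C,C_1,\dots,C_\rho$. A $t$-$(m,k,\lambda)$ design is a collection of $k$-subsets (blocks) of an $m$-set such that every $t$-subset lies in exactly $\lambda$ blocks. *)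

(* Defs.v *)
(* Vertices of H(m,2) are identified with their supports:
   subsets of the coordinate set 'I_m. *)
From mathcomp Require Import all_boot all_fingroup.
Set Implicit Arguments. Unset Strict Implicit. Unset Printing Implicit Defensive.

Section Hamming.
Variable m : nat.
Notation vtx := {set 'I_m}.

(* symmetric difference = vector addition in F_2^m *)
Definition symdiff (x y : vtx) : vtx := (x :\: y) :|: (y :\: x).

Definition hdist (x y : vtx) : nat := #|symdiff x y|.

Definition weight (x : vtx) : nat := #|x|.

(* d(alpha, C) for a nonempty code C (distances are <= m, so m is a neutral
   default for the minimum) *)
Definition dist_code (C : {set vtx}) (a : vtx) : nat :=
  \big[minn/m]_(c in C) hdist a c.

Definition cov_radius (C : {set vtx}) : nat :=
  \max_(a : vtx) dist_code C a.

Definition dist_class (C : {set vtx}) (i : nat) : {set vtx} :=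
  [set a | dist_code C a == i].

(* automorphisms of H(m,2): a coordinate permutation followed by a translation *)
Definition haut (s : {perm 'I_m}) (t : vtx) (x : vtx) : vtx :=
  symdiff (s @: x) t.

Definition in_aut (C : {set vtx}) (s : {perm 'I_m}) (t : vtx) : Prop :=
  haut s t @: C = C.

Definition completely_transitive (C : {set vtx}) : Prop :=
  forall i, i <= cov_radius C ->
  forall a b, a \in dist_class C i -> b \in dist_class C i ->
  exists s t, in_aut C s t /\ haut s t a = b.

Definition min_distance (C : {set vtx}) (d : nat) : Prop :=
  (exists c1 c2, [/\ c1 \in C, c2 \in C, c1 != c2 & hdist c1 c2 = d]) /\
  (forall c1 c2, c1 \in C -> c2 \in C -> c1 != c2 -> d <= hdist c1 c2).

Definition is_design (t k lambda : nat) (B : {set vtx}) : Prop :=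
  (forall b, b \in B -> #|b| = k) /\
  (forall T : vtx, #|T| = t -> #|[set b in B | T \subset b]| = lambda).

End Hamming.

(* Main.v *)
Require Import Defs.
From mathcomp Require Import all_boot all_fingroup.
From mathcomp Require Import zify.
Set Implicit Arguments. Unset Strict Implicit.

Section S.
Variable m : nat.
Notation vtx := {set 'I_m}.

Lemma in_symdiff (i : 'I_m) (x y : vtx) :
  (i \in symdiff x y) = (i \in x) (+) (i \in y).
Proof. by rewrite /symdiff !inE; case: (i \in x); case: (i \in y). Qed.

Lemma hdistE (x y : vtx) : hdist x y + 2 * #|x :&: y| = #|x| + #|y|.
Proof.
rewrite /hdist /symdiff cardsU.
have -> : (x :\: y) :&: (y :\: x) = set0.
  by apply/setP=> i; rewrite !inE; case: (i \in x); case: (i \in y).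
rewrite cards0 subn0.
have h1 := cardsID y x. have h2 := cardsID x y. rewrite (setIC y x) in h2.
lia.
Qed.

Lemma hdist0 (x : vtx) : hdist x set0 = #|x|.
Proof. have := hdistE x set0; rewrite setI0 cards0; lia. Qed.

Lemma hdist_eq0 (x y : vtx) : hdist x y = 0 -> x = y.
Proof.
move=> /cards0_eq h; apply/setP=> i.
have : i \in symdiff x y = false by rewrite h inE.
by rewrite in_symdiff; case: (i \in x); case: (i \in y).
Qed.

Lemma haut_hdist s t (a b : vtx) : hdist (haut s t a) (haut s t b) = hdist a b.
Proof.
rewrite /hdist /haut.
have mi : forall (X : vtx) i, (i \in s @: X) = ((s^-1)%g i \in X).
  by move=> X i; rewrite -{1}(permKV s i) mem_imset //; apply: perm_inj.
have -> : symdiff (symdiff (s @: a) t) (symdiff (s @: b) t) = s @: symdiff a b.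
  apply/setP=> i; rewrite !in_symdiff !mi in_symdiff.
  by case: (_ \in a); case: (_ \in b); case: (i \in t).
by rewrite card_imset //; apply: perm_inj.
Qed.

Lemma haut_inj s t : injective (@haut m s t).
Proof. by move=> a b h; apply: hdist_eq0; rewrite -(haut_hdist s t) h /hdist /symdiff setDv setU0 cards0. Qed.

Definition Ncnt (C : {set vtx}) (x : vtx) := #|[set c in C | hdist x c == 3]|.

Lemma Ncnt_le C s t x : in_aut C s t -> Ncnt C x <= Ncnt C (haut s t x).
Proof.
rewrite /in_aut /Ncnt => HC.
rewrite -(card_imset _ (@haut_inj s t)).
apply: subset_leq_card; apply/subsetP=> c /imsetP [c' Hc' ->].
move: Hc'; rewrite !inE haut_hdist => /andP [Hc' ->]; rewrite andbT.
by rewrite -HC; apply: imset_f.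
Qed.


Lemma card_le_m (x : vtx) : #|x| <= m.
Proof. by have := max_card (mem x); rewrite card_ord. Qed.

Lemma hdist_le_m (x y : vtx) : hdist x y <= m.
Proof. exact: card_le_m. Qed.

Lemma bigmin_le (I : finType) (P : pred I) (F : I -> nat) (j : I) k :
  P j -> \big[minn/k]_(i | P i) F i <= F j.
Proof.
move=> Pj; rewrite -big_filter.
have : j \in [seq i <- index_enum I | P i] by rewrite mem_filter Pj mem_index_enum.
elim: [seq i <- index_enum I | P i] => //= i r IH; rewrite big_cons inE.
case/predU1P => [<-|/IH h]; first exact: geq_minl.
exact: leq_trans (geq_minr _ _) h.
Qed.

Section Main.
Variables (C : {set vtx}) (d t : nat).
Hypotheses (HCT : completely_transitive C) (H0 : set0 \in C)
  (Hmd : min_distance C d) (Hd : 5 <= d <= 6) (Ht : t = d - 3).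

Lemma wt_ge c : c \in C -> c != set0 -> d <= #|c|.
Proof.
move=> Hc nz; have := Hmd.2 _ _ Hc H0 nz; by rewrite hdist0.
Qed.

Lemma distT (T : vtx) : #|T| = t -> dist_code C T = t.
Proof.
move=> HT; apply/eqP; rewrite eqn_leq; apply/andP; split.
  by rewrite -HT -hdist0; apply: bigmin_le.
rewrite /dist_code; apply: (big_ind (fun x => t <= x)).
- by rewrite -HT card_le_m.
- by move=> a b ha hb; rewrite leq_min ha hb.
move=> c Hc; case: (eqVneq c set0) => [->|nz]; first by rewrite hdist0 HT.
have := wt_ge Hc nz; have := hdistE T c; have : #|T :&: c| <= #|T| by apply: subset_leq_card; apply: subsetIl.
lia.
Qed.

Lemma charc (T c : vtx) : #|T| = t -> c \in C -> c != set0 ->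
  (hdist T c == 3) = (weight c == d) && (T \subset c).
Proof.
move=> HT Hc nz; have := wt_ge Hc nz; have := hdistE T c.
have hk : #|T :&: c| <= #|T| by apply: subset_leq_card; apply: subsetIl.
have hsub : (T \subset c) = (#|T| <= #|T :&: c|).
  apply/idP/idP => [/setIidPl -> //|h].
  have : T :&: c == T by rewrite eqEcard subsetIl h.
  by move/eqP <-; apply: subsetIr.
rewrite hsub /weight => h1 h2.
apply/eqP/andP => [h|[/eqP h h']]; first by split; [apply/eqP|]; lia.
lia.
Qed.

Definition Bset := [set c in C | weight c == d].
Definition Sset (T : vtx) := [set b in Bset | T \subset b].

Lemma Ncnt_S (T : vtx) : #|T| = t -> Ncnt C T = (t == 3) + #|Sset T|.
Proof.
move=> HT; rewrite /Ncnt (cardsD1 set0) inE H0 hdist0 HT /=; congr (_ + _).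
apply: eq_card => c; rewrite !inE.
case: eqVneq => [->|nz] /=.
  by rewrite /weight cards0 (_ : (0 == d) = false) ?andbF //; apply/eqP; lia.
case Cc: (c \in C) => //=; exact: charc.
Qed.

Lemma S_const (T1 T2 : vtx) : #|T1| = t -> #|T2| = t -> #|Sset T1| = #|Sset T2|.
Proof.
move=> h1 h2.
have key : forall a b : vtx, #|a| = t -> #|b| = t -> Ncnt C a <= Ncnt C b.
  move=> a b ha hb.
  have cr : t <= cov_radius C by rewrite /cov_radius -{1}(distT ha) leq_bigmax.
  have ina : a \in dist_class C t by rewrite inE distT.
  have inb : b \in dist_class C t by rewrite inE distT.
  have [s [tr [Ha Hab]]] := HCT cr ina inb.
  by rewrite -Hab; apply: Ncnt_le.
have := key _ _ h1 h2; have := key _ _ h2 h1; rewrite !Ncnt_S //; lia.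
Qed.

Lemma S_bound (T : vtx) : #|T| = t -> 3 * #|Sset T| + t <= m.
Proof.
move=> HT.
set S := Sset T.
set P := [set b :\: T | b in S].
have inS : forall b, b \in S -> [/\ b \in C, #|b| = d & T \subset b].
  by move=> b; rewrite !inE /weight => /andP [/andP [-> /eqP ->] ->].
have injS : {in S &, injective (fun b => b :\: T)}.
  move=> b1 b2 /inS [_ _ s1] /inS [_ _ s2] /= e.
  by rewrite -(setID b1 T) -(setID b2 T) e (setIidPr s1) (setIidPr s2).
have cP : #|P| = #|S| by apply: card_in_imset.
have c3 : forall A, A \in P -> #|A| = 3.
  move=> A /imsetP [b /inS [_ hb sb] ->]; rewrite cardsD (setIidPr sb); lia.
have triv : trivIset P.
  apply/trivIsetP => A B /imsetP [b1 Hb1 ->] /imsetP [b2 Hb2 ->] neq.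
  have nb : b1 != b2 by apply: contraNneq neq => ->.
  have [C1 c1 s1] := inS _ Hb1; have [C2 c2 s2] := inS _ Hb2.
  apply/pred0P => i /=; apply/negbTE/negP; rewrite !inE => /andP [/andP [nT i1] /andP [_ i2]].
  have sub : i |: T \subset b1 :&: b2.
    by apply/subsetP => j; rewrite !inE => /orP [/eqP ->|jT]; rewrite ?i1 ?i2 //= (subsetP s1) ?(subsetP s2).
  have hc := subset_leq_card sub; rewrite cardsU1 nT HT add1n in hc.
  have h1 := Hmd.2 _ _ C1 C2 nb; have h2 := hdistE b1 b2.
  move: hc h1 h2 c1 c2 Ht Hd.
  move: (hdist b1 b2) (#|b1 :&: b2|) (#|b1|) (#|b2|) => x y z w.
  clear; lia.
move: triv; rewrite /trivIset => /eqP.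
rewrite (eq_bigr (fun _ => 3)) // sum_nat_const cP => e.
have : cover P \subset ~: T.
  apply/bigcupsP => A /imsetP [b _ ->]; apply/subsetP => j; rewrite !inE; by case/andP.
move/subset_leq_card; have := cardsC T; rewrite card_ord -e; lia.
Qed.

Lemma main_gen : exists lambda, is_design t d lambda Bset /\ 3 * lambda + t <= m.
Proof.
have Bsz : forall b, b \in Bset -> #|b| = d by move=> b; rewrite inE /weight => /andP [_ /eqP].
case: (pickP (fun T : vtx => #|T| == t)) => [T0 /eqP hT0 | none].
  exists #|Sset T0|; split; last exact: S_bound.
  split => // T hT; exact: (S_const hT hT0).
exists 0; split.
  split => // T hT; by have := none T; rewrite hT eqxx.
have [c1 [c2 [_ _ _ e]]] := Hmd.1; have := hdist_le_m c1 c2; lia.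
Qed.

End Main.
End S.

Theorem lemma2p11 (m : nat) (C : {set {set 'I_m}}) (delta : nat) :
  completely_transitive C ->
  set0 \in C ->
  min_distance C delta ->
  (delta = 5 \/ delta = 6) ->
  exists lambda : nat,
    let B := [set c in C | weight c == delta] in
    (delta = 5 /\ is_design 2 5 lambda B /\ 3 * lambda + 2 <= m) \/
    (delta = 6 /\ is_design 3 6 lambda B /\ 3 * lambda + 3 <= m).
Proof.
move=> HCT H0 Hmd hd.
have Hd : 5 <= delta <= 6 by case: hd => ->.
have [lam [des bnd]] := main_gen HCT H0 Hmd Hd (erefl (delta - 3)).
exists lam => /=; case: hd => hd; subst delta; [left|right]; by split.
Qed.
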